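(* Fix $\mathbf{x} \in \Omega$, $\alpha \in [0,1)$, and a total preorder $R$ on $\Omega$ with $\mathcal{F}(\Omega(\mathbf{x},R),\alpha)$ nonempty. Suppose there exists a set $C \subseteq S$ such that for any $G, H \in \mathcal{F}$ agreeing both cumulatively and pointwise on $C$, $P_G[\Omega(\mathbf{x},R)] = P_H[\Omega(\mathbf{x},R)]$. Then $$B_R^*(\mathbf{x}) = \min\{E[F] : F \in \mathcal{F}_{C^+}(\Omega(\mathbf{x},R),\alpha)\}.$$
   Context: Fix integers $m \ge 2$, $n \ge 1$ and reals $S_{\min} < S_{\max}$; $S = \{S_0,\dots,S_{m-1}\}$ with $S_k = S_{\min} + k\frac{S_{\max}-S_{\min}}{m-1}$. $\mathcal{F}$ is the set of probability distributions on $S$, identified with the probability simplex in $\mathbb{R}^m$ with the Euclidean topology; $E[F]$ is the mean. $\Omega$ is the set of samples of size $n$ from $S$, identified with their sorted versions. $P_F[\Omega']$ is the probability that the sorted sample of $n$ i.i.d. draws from $F$ lies in $\Omega' \subseteq \Omega$; $\mathcal{G}(\Omega',\alpha) = \{F : P_F[\Omega'] > \alpha\}$ and $\mathcal{F}(\Omega',\alpha)$ is its closure. A total preorder $R$ on $\Omega$ is a reflexive, transitive, total relation $\lesssim_R$; $\Omega(\mathbf{x},R) = \{\mathbf{y} : \mathbf{x} \lesssim_R \mathbf{y}\}$; $B_R^*(\mathbf{x}) = \min\{E[F] : F \in \mathcal{F}(\Omega(\mathbf{x},R),\alpha)\}$. For $C \subseteq S$: $G,H \in \mathcal{F}$ agree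 pointwise on $C$ if $P_G[X = s] = P_H[X = s]$ for all $s \in C$, and cumulatively on $C$ if $P_G[X \le s] = P_H[X \le s]$ for all $s \in C$ ($X$ a single draw). The refinement $\mathcal{F}_C = \{F \in \mathcal{F} : P_F[X = s] = 0 \ \forall s \in S\setminus C\}$, $\mathcal{G}_C(\Omega',\alpha) = \mathcal{F}_C \cap \mathcal{G}(\Omega',\alpha)$, and $\mathcal{F}_C(\Omega',\alpha)$ is the closure of $\mathcal{G}_C(\Omega',\alpha)$. The augmentation is $C^+ = C \cup \{S_{\min}\} \cup \{S_{j+1} : S_j \in C,\ j \le m-2\}$. *)

(* Defs.v *)
From HB Require Import structures.
From mathcomp Require Import all_boot all_order all_algebra.
From mathcomp Require Import all_classical all_reals all_analysis.
Set Implicit Arguments. Unset Strict Implicit. Unset Printing Implicit Defensive.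
Import Order.TTheory GRing.Theory Num.Theory.
Import numFieldNormedType.Exports.
Local Open Scope classical_set_scope.
Local Open Scope ring_scope.

Section Defs.
Variables (R : realType) (m n : nat).

Definition Spt (Smin Smax : R) (k : 'I_m) : R :=
  Smin + (k%:R) * ((Smax - Smin) / (m.-1)%:R).

(* A distribution on S is a row vector in R^m; pr F k = P_F[X = S_k]. *)
Definition pr (F : 'rV[R]_m) (k : 'I_m) : R := F ord0 k.

Definition simplex : set 'rV[R]_m :=
  [set F | (forall k, 0 <= pr F k) /\ \sum_(k < m) pr F k = 1].

Definition mean (Smin Smax : R) (F : 'rV[R]_m) : R :=
  \sum_(k < m) pr F k * Spt Smin Smax k.

(* Samples of size n from S, identified with their sorted versions
   (nondecreasing n-tuples of indices). *)
Definition ordle (i j : 'I_m) : bool := (i <= j)%N.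
Definition Omega := {s : n.-tuple 'I_m | sorted ordle s}.

(* P_F[Om']: probability that the sorted sample of n iid draws from F lies in Om'. *)
Definition PF (F : 'rV[R]_m) (Om' : Omega -> bool) : R :=
  \sum_(x : n.-tuple 'I_m |
          [exists w : Omega, Om' w && (val (val w) == sort ordle x)])
     \prod_(i < n) pr F (tnth x i).

Definition calG (Om' : Omega -> bool) (alpha : R) : set 'rV[R]_m :=
  [set F | simplex F /\ alpha < PF F Om'].
Definition calF (Om' : Omega -> bool) (alpha : R) : set 'rV[R]_m :=
  closure (calG Om' alpha).

Definition calF_C (C : {set 'I_m}) : set 'rV[R]_m :=
  [set F | simplex F /\ forall k, k \notin C -> pr F k = 0].
Definition calG_C (C : {set 'I_m}) (Om' : Omega -> bool) (alpha : R) :=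
  calF_C C `&` calG Om' alpha.
Definition calF_Cref (C : {set 'I_m}) (Om' : Omega -> bool) (alpha : R) :=
  closure (calG_C C Om' alpha).

Definition agree_pointwise (C : {set 'I_m}) (G H : 'rV[R]_m) :=
  forall k, k \in C -> pr G k = pr H k.
Definition agree_cumulative (C : {set 'I_m}) (G H : 'rV[R]_m) :=
  forall k, k \in C ->
    \sum_(j < m | (j <= k)%N) pr G j = \sum_(j < m | (j <= k)%N) pr H j.

Definition augment (C : {set 'I_m}) : {set 'I_m} :=
  [set k : 'I_m | [|| k \in C, (val k == 0)%N
                    | [exists j in C, (val j).+1 == val k]]].

End Defs.

Definition total_preorder (T : Type) (r : rel T) : Prop :=
  reflexive r /\ transitive r /\ total r.

Definition upset (T : Type) (r : rel T) (x : T) : T -> bool := fun y => r x y.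

Definition is_min (R : realType) (m : nat) (E : 'rV[R]_m -> R)
  (A : set 'rV[R]_m) (v : R) : Prop :=
  (exists F, A F /\ E F = v) /\ (forall F, A F -> v <= E F).

(* Main.v *)
Require Import Defs.
From HB Require Import structures.
From mathcomp Require Import all_boot all_order all_algebra.
From mathcomp Require Import all_classical all_reals all_analysis.
Import Order.TTheory GRing.Theory Num.Theory.
Import numFieldNormedType.Exports.
Local Open Scope classical_set_scope.
Local Open Scope ring_scope.

Section Helpers.
Variables (R : realType) (m : nat).

Lemma coord_le (F : 'rV[R]_m) k : `|F ord0 k| <= `|F|.
Proof.
have -> : `|F| = mx_norm F by [].
rewrite mx_normrE.
exact: (le_bigmax _ (fun ij : 'I_1 * 'I_m => `|F ij.1 ij.2|) (ord0, k)).
Qed.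

Lemma norm_le_row (F : 'rV[R]_m) c : 0 <= c -> (forall k, `|F ord0 k| <= c) -> `|F| <= c.
Proof.
move=> c0 H.
have -> : `|F| = mx_norm F by [].
rewrite mx_normrE; apply: bigmax_le => // -[i j] _ /=.
by rewrite (ord1 i).
Qed.

Lemma lip_cont (f : 'rV[R]_m -> R) (K : R) :
  (forall a b, `|f a - f b| <= K * `|a - b|) -> continuous f.
Proof.
move=> H x; apply/(@cvgrPdist_lt _ _ _ (nbhs x) (nbhs_filter x)) => e e0.
have K0 : 0 < `|K| + 1 by rewrite ltr_wpDl.
apply/nbhs_ballP; exists (e / (`|K| + 1)); first by rewrite /=; apply: divr_gt0.
move=> y; rewrite -ball_normE /ball_ /= => hxy.
apply: (le_lt_trans (H x y)).
apply: (le_lt_trans (y := (`|K| + 1) * `|x - y|)).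
  by rewrite ler_wpM2r // (le_trans (ler_norm K)) // lerDl.
by rewrite -ltr_pdivlMl // mulrC.
Qed.

Lemma lipM_cont (f : 'rV[R]_m -> 'rV[R]_m) (K : R) :
  (forall a b, `|f a - f b| <= K * `|a - b|) -> continuous f.
Proof.
move=> H x; apply/(@cvgrPdist_lt _ _ _ (nbhs x) (nbhs_filter x)) => e e0.
have K0 : 0 < `|K| + 1 by rewrite ltr_wpDl.
apply/nbhs_ballP; exists (e / (`|K| + 1)); first by rewrite /=; apply: divr_gt0.
move=> y; rewrite -ball_normE /ball_ /= => hxy.
apply: (le_lt_trans (H x y)).
apply: (le_lt_trans (y := (`|K| + 1) * `|x - y|)).
  by rewrite ler_wpM2r // (le_trans (ler_norm K)) // lerDl.
by rewrite -ltr_pdivlMl // mulrC.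
Qed.

Lemma lin_lip (c : 'I_m -> R) (F G : 'rV[R]_m) :
  `|\sum_k F ord0 k * c k - \sum_k G ord0 k * c k| <= (\sum_k `|c k|) * `|F - G|.
Proof.
rewrite -sumrB mulr_suml.
apply: (le_trans (ler_norm_sum _ _ _)); apply: ler_sum => k _.
rewrite -mulrBl normrM mulrC ler_wpM2l //.
by have := coord_le (F - G) k; rewrite !mxE.
Qed.

Lemma closure_pre (T U : topologicalType) (f : T -> U) (D : set U) (A : set T) :
  continuous f -> closed D -> A `<=` f @^-1` D -> closure A `<=` f @^-1` D.
Proof.
move=> cf cD sA.
have cl : closed (f @^-1` D) by move/continuous_closedP: cf; apply.
move/closure_id: cl => ->; exact: closureS.
Qed.


Section Tmap.
Variable (C : {set 'I_m}).
Let A := augment C.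

Definition dn (k : 'I_m) : nat := \max_(j : 'I_m | (j <= k)%N && (j \in A)) j.

Lemma dn_le (k : 'I_m) : (dn k <= k)%N.
Proof. by apply/bigmax_leqP => j /andP[]. Qed.

Lemma dn_ge (k : 'I_m) (j : 'I_m) : (j <= k)%N -> j \in A -> (j <= dn k)%N.
Proof. by move=> jk jA; apply: (@leq_bigmax_cond _ _ (fun j : 'I_m => nat_of_ord j) j); rewrite jk jA. Qed.

Lemma dn_in (k : 'I_m) : exists2 j : 'I_m, j \in A & val j = dn k.
Proof.
have m0 : (0 < m)%N by apply: leq_ltn_trans (ltn_ord k).
pose j0 : 'I_m := Ordinal m0.
have : (0 < #|[pred j : 'I_m | (j <= k)%N && (j \in A)]|)%N.
  apply/card_gt0P; exists j0; rewrite inE /=.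
  by rewrite /A /augment inE /j0 /= orbT.
move=> /(eq_bigmax_cond (fun j : 'I_m => nat_of_ord j)) [i0].
by rewrite inE => /andP[_ i0A] e; exists i0.
Qed.

Definition dO (k : 'I_m) : 'I_m := insubd k (dn k).

Lemma dOE (k : 'I_m) : val (dO k) = dn k.
Proof. by rewrite val_insubd (leq_ltn_trans (dn_le k) (ltn_ord k)). Qed.

Lemma dO_in (k : 'I_m) : dO k \in A.
Proof. by have [j jA e] := dn_in k; rewrite (_ : dO k = j) //; apply: val_inj; rewrite dOE. Qed.

Lemma C_A (j : 'I_m) : j \in C -> j \in A.
Proof. by move=> jC; rewrite /A /augment inE jC. Qed.

Lemma dn_C (j k : 'I_m) : j \in C -> (dn k <= j)%N = (k <= j)%N.
Proof.
move=> jC; case: (leqP k j) => kj.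
  exact: leq_trans (dn_le k) kj.
apply/negbTE; rewrite -ltnNge.
have j1 : (j.+1 < m)%N by apply: leq_ltn_trans kj (ltn_ord k).
pose j' : 'I_m := Ordinal j1.
have j'A : j' \in A.
  rewrite /A /augment inE; apply/orP; right; apply/orP; right.
  by apply/existsP; exists j; rewrite jC /= eqxx.
exact: (dn_ge k j' kj j'A).
Qed.

Lemma dO_eqC (j k : 'I_m) : j \in C -> (dO k == j) = (k == j).
Proof.
move=> jC; apply/idP/idP => [/eqP e|/eqP ->].
  have e' : dn k = j by rewrite -dOE e.
  have : (dn k <= j)%N by rewrite e'.
  rewrite dn_C // => kj.
  by rewrite -(inj_eq val_inj) /= eqn_leq kj -e' dn_le.
apply/eqP; apply: val_inj; rewrite dOE.
by apply/eqP; rewrite eqn_leq dn_le dn_ge // C_A.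
Qed.

Definition Tm (F : 'rV[R]_m) : 'rV[R]_m := \row_j \sum_(k < m | dO k == j) F ord0 k.

Lemma TmE F j : pr (Tm F) j = \sum_k F ord0 k * (if dO k == j then 1 else 0).
Proof.
rewrite /pr mxE big_mkcond /=; apply: eq_bigr => k _.
by case: ifP; rewrite ?mulr1 ?mulr0.
Qed.

Lemma sum_pick (P : pred 'I_m) (d : 'I_m) (g : 'I_m -> R) :
  \sum_(i | P i) (if d == i then g i else 0) = if P d then g d else 0.
Proof.
case: (boolP (P d)) => Pd.
  rewrite (bigD1 d) //= eqxx big1 ?addr0 // => i /andP[_].
  by rewrite eq_sym => /negbTE ->.
by apply: big1 => i Pi; case: eqP => // e; rewrite e Pi in Pd.
Qed.

Lemma sum_pickT (d : 'I_m) (g : 'I_m -> R) :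
  \sum_i (if d == i then g i else 0) = g d.
Proof. by rewrite (sum_pick xpredT). Qed.

Lemma Tm_swap F (g : 'I_m -> R) (P : pred 'I_m) :
  \sum_(j | P j) pr (Tm F) j * g j = \sum_(k | P (dO k)) F ord0 k * g (dO k).
Proof.
under eq_bigr do rewrite /pr mxE big_mkcond mulr_suml /=.
rewrite exchange_big /= [RHS]big_mkcond /=; apply: eq_bigr => k _.
rewrite -(sum_pick P (dO k) (fun i => F ord0 k * g i)).
by apply: eq_bigr => i _; case: ifP; rewrite ?mul0r.
Qed.

Lemma Tm_pointwise F : agree_pointwise C (Tm F) F.
Proof.
move=> j jC; rewrite /pr mxE (eq_bigl (pred1 j)) ?big_pred1_eq //.
by move=> k; rewrite dO_eqC.
Qed.

Lemma Tm_cumulative F : agree_cumulative C (Tm F) F.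
Proof.
move=> j jC.
have := Tm_swap F (fun _ => 1) (fun i : 'I_m => (i <= j)%N).
under eq_bigr do rewrite mulr1.
under [X in _ = X -> _]eq_bigr do rewrite mulr1.
move=> ->; apply: eq_bigl => k; by rewrite dOE dn_C.
Qed.

Lemma Tm_simplex F : simplex F -> simplex (Tm F).
Proof.
move=> [F0 F1]; split.
  by move=> k; rewrite /pr mxE; apply: sumr_ge0 => i _; exact: F0.
have := Tm_swap F (fun _ => 1) xpredT.
under eq_bigr do rewrite mulr1.
under [X in _ = X -> _]eq_bigr do rewrite mulr1.
by move=> ->.
Qed.

Lemma Tm_support F : forall k, k \notin A -> pr (Tm F) k = 0.
Proof.
move=> k kA; rewrite /pr mxE big1 // => i /eqP e.
by have := dO_in i; rewrite e (negbTE kA).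
Qed.

Lemma Tm_mean Smin Smax F : Smin < Smax -> simplex F ->
  mean Smin Smax (Tm F) <= mean Smin Smax F.
Proof.
move=> lt [F0 _]; rewrite /mean (Tm_swap F (Spt Smin Smax) xpredT).
apply: ler_sum => k _; apply: ler_wpM2l; first exact: F0.
rewrite /Spt lerD2l ler_wpM2r ?ler_nat ?dOE ?dn_le //.
by rewrite divr_ge0 // subr_ge0 ltW.
Qed.

Lemma Tm_lip F G : `|Tm F - Tm G| <= m%:R * `|F - G|.
Proof.
apply: norm_le_row; first by rewrite mulr_ge0.
move=> j; have := lin_lip (fun k => if dO k == j then 1 else 0) F G.
rewrite -!TmE /pr !mxE => h; apply: (le_trans h); apply: ler_wpM2r => //.
apply: (le_trans (y := \sum_(k < m) (1:R))).
  by apply: ler_sum => k _; case: ifP; rewrite ?normr1 ?normr0.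
by rewrite sumr_const card_ord.
Qed.

End Tmap.
End Helpers.
Arguments closure_pre {T U f D A}.
Arguments Tm {R m} C F.
Arguments lipM_cont {R m f K}.


Theorem lemma9 (R : realType) (m n : nat) (Smin Smax : R)
  (x : Omega m n) (alpha : R) (rel_R : rel (Omega m n)) (C : {set 'I_m}) :
  (2 <= m)%N -> (1 <= n)%N -> Smin < Smax ->
  0 <= alpha -> alpha < 1 ->
  total_preorder rel_R ->
  calF (upset rel_R x) alpha !=set0 ->
  (forall G H : 'rV[R]_m, simplex G -> simplex H ->
     agree_cumulative C G H -> agree_pointwise C G H ->
     PF G (upset rel_R x) = PF H (upset rel_R x)) ->
  exists b : R,
    is_min (mean Smin Smax) (calF (upset rel_R x) alpha) b /\
    is_min (mean Smin Smax) (calF_Cref (augment C) (upset rel_R x) alpha) b.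
Proof.
move=> m2 n1 lt a0 a1 tp [F0 HF0] hyp.
set Om := upset rel_R x.
set cF := calF Om alpha.
have cmean := @lip_cont R m (mean Smin Smax) _ (fun a b => lin_lip _ _ (Spt Smin Smax) a b).
have csum : continuous (fun F : 'rV[R]_m => \sum_k F ord0 k * 1).
  apply: (@lip_cont R m _ (\sum_(k < m) `|(1:R)|)) => a b; exact: lin_lip.
have ccoord k : continuous (fun F : 'rV[R]_m => F ord0 k) := @coord_continuous R 1 m ord0 k.
have cF_simplex : cF `<=` @simplex R m.
  move=> F HF; split.
    move=> k; apply: (closure_pre (ccoord k) (@closed_ge R 0) _ _ HF).
    by move=> G [[G0 _] _]; exact: G0 k.
  have h : ((fun F : 'rV[R]_m => \sum_k F ord0 k * 1) @^-1` [set z : R | z = 1]) F.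
    apply: (closure_pre csum (@closed_eq R 1) _ _ HF) => G [[_ G1] _] /=.
    by under eq_bigr do rewrite mulr1.
  by move: h => /=; under eq_bigr do rewrite mulr1.
have cF_bd : forall F, cF F -> `|F| <= 1.
  move=> F /cF_simplex [Fp Fs]; apply: norm_le_row => // k.
  rewrite ger0_norm; last exact: Fp.
  rewrite -Fs (bigD1 k) //= lerDl; apply: sumr_ge0 => i _; exact: Fp.
have cF_compact : compact cF.
  apply: bounded_closed_compact; last exact: closed_closure.
  apply: filterS (nbhs_pinfty_ge (num_real (1:R))) => M M1 F HF /=.
  exact: le_trans (cF_bd F HF) M1.
have [Fs FsIn Fsmin] := EVT_min_rV (ex_intro _ F0 HF0) cF_compact (continuous_subspaceT cmean).
have {FsIn} FsIn : cF Fs by move: FsIn; rewrite in_setE.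
have TG : calG Om alpha `<=` (Tm C) @^-1` calG_C (augment C) Om alpha.
  move=> G [Gs Ga]; split; first by split; [exact: Tm_simplex | exact: Tm_support].
  split; first exact: Tm_simplex.
  by rewrite (hyp _ _ (@Tm_simplex R m C G Gs) Gs (@Tm_cumulative R m C G) (@Tm_pointwise R m C G)).
have cT : continuous (Tm C) := lipM_cont (@Tm_lip R m C).
have TFs : calF_Cref (augment C) Om alpha (Tm C Fs).
  have sA : calG Om alpha `<=` Tm C @^-1` closure (calG_C (augment C) Om alpha).
    move=> G /TG h; rewrite /preimage /=.
    by apply: subset_closure.
  exact: (closure_pre cT (@closed_closure _ (calG_C (augment C) Om alpha)) sA _ FsIn).
have sub : calF_Cref (augment C) Om alpha `<=` cF.
  by apply: closureS => G [].
exists (mean Smin Smax Fs); split.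
  split; first by exists Fs.
  by move=> G HG; apply: Fsmin; rewrite in_setE.
split; last by move=> G HG; apply: Fsmin; rewrite in_setE; exact: sub.
exists (Tm C Fs); split => //; apply/eqP; rewrite eq_le.
rewrite Tm_mean //; last exact: cF_simplex.
by apply: Fsmin; rewrite in_setE; exact: sub.
Qed.
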